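(* Let $\mathcal{A}\subseteq 2^P$ be a connected access structure and let $\mathcal M=(f,sP)$ be a polymatroid realizing $\mathcal{A}$ such that $f(a)=f(s)=1$ for all $a\in P$. Then $\mathcal M$ is a matroid, and it is uniquely determined by $\mathcal{A}$: any two polymatroids satisfying these hypotheses for the same $\mathcal{A}$ coincide.
   Context: A polymatroid $(f,M)$ consists of a finite set $M$ and a function $f$ on subsets of $M$ with $f(\emptyset)=0$ that is non-negative, monotone and submodular; a matroid is an integer-valued polymatroid whose singletons have rank $0$ or $1$. An access structure on a finite set $P$ is a non-empty upward-closed $\mathcal{A}\subseteq 2^P$ with $\emptyset\notin\mathcal{A}$; members are qualified. A participant $i\in P$ is important if there is $A\subseteq P$, $A\notin\mathcal{A}$, with $A\cup\{i\}\in\mathcal{A}$; $\mathcal{A}$ is connected if every participant is important. Let $s\notin P$; juxtaposition denotes union. A polymatroid $(f,sP)$ realizes $\mathcal{A}$ if for every $A\subseteq P$: $A\in\mathcal{A}$ iff $f(sA)=f(A)$, and $A\notin\mathcal{A}$ iff $f(sA)=f(A)+f(s)$. *)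

(* Defs.v *)
(* Ground set sP is modelled as [option P], with [None] = s. *)
From HB Require Import structures.
From mathcomp Require Import all_boot all_order all_algebra.
Set Implicit Arguments. Unset Strict Implicit. Unset Printing Implicit Defensive.
Import Order.TTheory GRing.Theory Num.Theory.
Local Open Scope ring_scope.

Definition polymatroid (R : realFieldType) (M : finType) (f : {set M} -> R) : Prop :=
  [/\ f set0 = 0,
      (forall X : {set M}, 0 <= f X),
      (forall X Y : {set M}, X \subset Y -> f X <= f Y) &
      (forall X Y : {set M}, f (X :|: Y) + f (X :&: Y) <= f X + f Y)].

Definition matroid (R : realFieldType) (M : finType) (f : {set M} -> R) : Prop :=
  [/\ polymatroid f,
      (forall X : {set M}, exists z : int, f X = z%:~R) &
      (forall x : M, f [set x] = 0 \/ f [set x] = 1)].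

Definition access_structure (P : finType) (A : {set {set P}}) : Prop :=
  [/\ A != set0,
      (forall X Y : {set P}, X \in A -> X \subset Y -> Y \in A) &
      set0 \notin A].

Definition important (P : finType) (A : {set {set P}}) (i : P) : Prop :=
  exists X : {set P}, X \notin A /\ (i |: X) \in A.

Definition connected_as (P : finType) (A : {set {set P}}) : Prop :=
  forall i : P, important A i.

Definition liftP (P : finType) (X : {set P}) : {set option P} := Some @: X.
Definition withs (P : finType) (X : {set P}) : {set option P} := None |: liftP X.

Definition realizes (R : realFieldType) (P : finType) (f : {set option P} -> R)
    (A : {set {set P}}) : Prop :=
  forall X : {set P},
    (X \in A <-> f (withs X) = f (liftP X)) /\
    (X \notin A <-> f (withs X) = f (liftP X) + f [set None]).

(* Main.v *)
Require Import Defs.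
From HB Require Import structures.
From mathcomp Require Import all_boot all_order all_algebra.
From mathcomp Require Import ring lra.
From Stdlib Require Import FunctionalExtensionality.
Set Implicit Arguments. Unset Strict Implicit. Unset Printing Implicit Defensive.
Import Order.TTheory GRing.Theory Num.Theory.
Local Open Scope ring_scope.

Section Core.
Variable R : realFieldType.
Variable E : finType.
Variable s : E.
Variable f : {set E} -> R.
Variable Q : {set E} -> bool.
Implicit Types (X Y L S Z W V B : {set E}) (x y z r c b v : E).
Hypothesis f0 : f set0 = 0.
Hypothesis fmono : forall X Y : {set E}, X \subset Y -> f X <= f Y.
Hypothesis fsub : forall X Y : {set E}, f (X :|: Y) + f (X :&: Y) <= f X + f Y.
Hypothesis f1 : forall x, f [set x] = 1.
Hypothesis Qmono : forall X Y : {set E}, X \subset Y -> Q X -> Q Y.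
Hypothesis Q0 : ~~ Q set0.
Hypothesis real : forall X : {set E}, s \notin X -> f (s |: X) = f X + (if Q X then 0 else 1).

Definition d (x : E) (Y : {set E}) := f (x |: Y) - f Y.

Lemma d_ge0 x Y : 0 <= d x Y.
Proof. by rewrite /d subr_ge0; apply: fmono; apply: subsetUr. Qed.

Lemma d_le1 x Y : x \notin Y -> d x Y <= 1.
Proof.
move=> xY; have := fsub [set x] Y.
have -> : [set x] :&: Y = set0.
  by apply/setP=> z; rewrite !inE; apply/andP=> -[/eqP -> ]; rewrite (negbTE xY).
by rewrite f0 f1 /d addr0 => H; lra.
Qed.

Lemma d_anti x Y (Y' : {set E}) : Y \subset Y' -> x \notin Y' -> d x Y' <= d x Y.
Proof.
move=> sYY' xY'; have := fsub (x |: Y) Y'.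
have -> : (x |: Y) :|: Y' = x |: Y'.
  by rewrite -setUA (setUidPr sYY').
have -> : (x |: Y) :&: Y' = Y.
  apply/setP=> z; rewrite !inE; case: (z =P x) => [->|_] /=.
    by rewrite (negbTE xY'); apply/esym/negbTE/negP=> /(subsetP sYY'); rewrite (negbTE xY').
  by apply/andP/idP=> [[]//|zY]; split=> //; apply: (subsetP sYY').
by rewrite /d => H; lra.
Qed.

Lemma d01 x Y : x \notin Y -> d x Y = 0 \/ d x Y = 1 -> (d x Y = 0 \/ d x Y = 1).
Proof. by []. Qed.

Lemma chain n (L S : {set E}) : #|S| = n -> [disjoint L & S] ->
  (forall r, r \in S -> d r ((L :|: S) :\ r) = 1) -> f (L :|: S) = f L + (#|S|)%:R.
Proof.
elim: n S => [|n IH] S cS dLS H.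
  by move/eqP: cS; rewrite cards_eq0 => /eqP ->; rewrite setU0 cards0 addr0.
have : (0 < #|S|)%N by rewrite cS.
case/card_gt0P=> r rS.
have cS1 : #|S :\ r| = n by move: cS; rewrite (cardsD1 r S) rS add1n => -[].
have dLS1 : [disjoint L & S :\ r].
  by apply: disjointWr dLS; apply: subsetDl.
have rL : r \notin L.
  by rewrite (disjointFl dLS rS).
have E1 : (L :|: S) :\ r = L :|: (S :\ r).
  apply/setP=> z; rewrite !inE; case: (z =P r) => [->|_] /=; last by [].
  by rewrite (negbTE rL).
have H1 : forall r', r' \in S :\ r -> d r' ((L :|: (S :\ r)) :\ r') = 1.
  move=> r' r'S; have r'S' : r' \in S by move: r'S; rewrite !inE => /andP[].
  apply/eqP; rewrite eq_le; apply/andP; split.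
    by apply: d_le1; rewrite !inE eqxx.
  rewrite -(H r' r'S'); apply: d_anti; last by rewrite !inE eqxx.
  apply/subsetP=> z; rewrite !inE => /andP[-> /=] /orP[->//|/andP[_ ->]]; by rewrite orbT.
have IH1 := IH (S :\ r) cS1 dLS1 H1; rewrite cS1 in IH1.
have HS : L :|: S = r |: (L :|: (S :\ r)).
  by rewrite -E1 setD1K // inE rS orbT.
have := H r rS; rewrite E1 /d -HS IH1 => Hd.
rewrite (cardsD1 r S) rS cS1 add1n.
have -> : f (L :|: S) = f L + n%:R + 1 by lra.
by rewrite -addrA -natr1.
Qed.

Lemma dsE Y : s \notin Y -> d s Y = if Q Y then 0 else 1.
Proof. by move=> sY; rewrite /d real //; ring. Qed.

Lemma witness x Y : x != s -> x \notin Y -> s \notin Y -> ~~ Q Y -> Q (x |: Y) ->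
  d x Y = 1.
Proof.
move=> xs xY sY nQY QxY.
have sxY : s \notin x |: Y by rewrite !inE negb_or eq_sym xs.
have h1 := real sxY; rewrite QxY addr0 in h1.
have h2 := real sY; rewrite (negbTE nQY) in h2.
have h3 : f (s |: Y) <= f (s |: (x |: Y)) by apply: fmono; apply: setUS; apply: subsetUr.
have h4 := d_le1 xY.
rewrite /d in h4 *; lra.
Qed.

Definition minq Z := [&& Q Z, s \notin Z & [forall z in Z, ~~ Q (Z :\ z)]].

Lemma exists_minq n W : #|W| = n -> Q W -> s \notin W -> exists2 Z : {set E}, Z \subset W & minq Z.
Proof.
elim: n W => [|n IH] W cW QW sW.
  by move/eqP: cW; rewrite cards_eq0 => /eqP WE; move: Q0; rewrite -WE QW.
case: (boolP [forall z in W, ~~ Q (W :\ z)]) => Hall.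
  by exists W => //; rewrite /minq QW sW Hall.
move/forall_inPn: Hall => [z zW /negPn QWz].
have cW1 : #|W :\ z| = n by move: cW; rewrite (cardsD1 z W) zW add1n => -[].
have sW1 : s \notin W :\ z by rewrite !inE negb_and sW orbT.
have [Z sZ mZ] := IH _ cW1 QWz sW1.
by exists Z => //; apply: subset_trans sZ (subsetDl _ _).
Qed.

Section MQ.
Variable Z : {set E}.
Hypothesis mZ : minq Z.

Lemma mq_Q : Q Z. Proof. by case/and3P: mZ. Qed.
Lemma mq_s : s \notin Z. Proof. by case/and3P: mZ. Qed.
Lemma mq_min z : z \in Z -> ~~ Q (Z :\ z).
Proof. by case/and3P: mZ => _ _ /forall_inP; apply. Qed.

Lemma mq_d1 z : z \in Z -> d z (Z :\ z) = 1.
Proof.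
move=> zZ; apply: witness.
- by apply/eqP=> zs; move: mq_s; rewrite -zs zZ.
- by rewrite !inE eqxx.
- by rewrite !inE negb_and mq_s orbT.
- exact: mq_min.
- by rewrite setD1K // mq_Q.
Qed.

Lemma mq_f W : W \subset Z -> f W = (#|W|)%:R.
Proof.
move=> WZ.
have := @chain #|W| set0 W erefl _ _.
rewrite set0U f0 add0r; apply.
  by rewrite -setI_eq0 set0I.
move=> r rW; apply/eqP; rewrite eq_le; apply/andP; split.
  by apply: d_le1; rewrite !inE eqxx.
have rZ : r \in Z by apply: (subsetP WZ).
rewrite -(mq_d1 rZ); apply: d_anti; last by rewrite !inE eqxx.
by apply: setSD.
Qed.

Lemma mq_fsZ : f (s |: Z) = (#|Z|)%:R.
Proof. by rewrite real ?mq_s // mq_Q addr0 mq_f. Qed.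

Lemma mq_nQ W : W \subset Z -> W != Z -> ~~ Q W.
Proof.
move=> WZ WnZ; apply/negP=> QW.
have : ~~ (Z \subset W) by apply/negP=> ZW; move: WnZ; rewrite eqEsubset WZ ZW.
case/subsetPn=> z zZ zW.
have : Q (Z :\ z).
  apply: Qmono QW; apply/subsetP=> y yW; rewrite !inE (subsetP WZ) // andbT.
  by apply/eqP=> yz; move: zW; rewrite -yz yW.
by rewrite (negbTE (mq_min zZ)).
Qed.

Lemma mq_fs W : W \subset Z -> W != Z -> f (s |: W) = (#|W|)%:R + 1.
Proof.
move=> WZ WnZ.
have sW : s \notin W by apply/negP=> /(subsetP WZ); rewrite (negbTE mq_s).
by rewrite real // (negbTE (mq_nQ WZ WnZ)) mq_f.
Qed.

Lemma mq_dz0 z : z \in Z -> d z (s |: (Z :\ z)) = 0.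
Proof.
move=> zZ; rewrite /d.
have -> : z |: (s |: (Z :\ z)) = s |: Z by rewrite setUCA setD1K.
rewrite mq_fsZ mq_fs ?subsetDl //; last first.
  by apply/negP=> /eqP ZE; move: zZ; rewrite -ZE !inE eqxx.
rewrite [in X in X - _](cardsD1 z Z) zZ add1n -natr1; ring.
Qed.

Lemma mq_ne : Z != set0.
Proof. by apply/negP=> /eqP ZE; move: mq_Q; rewrite ZE (negbTE Q0). Qed.
End MQ.

Definition good x Y := d x Y = 0 \/ d x Y = 1.

Lemma mcore c Y
  (IH : forall c' (Y' : {set E}), (#|Y'| < #|Y|)%N -> c' \notin Y' -> good c' Y')
  (cY : c \notin Y) (b1 : 0 < d c Y) (b2 : d c Y < 1) b (bY : b \in Y) :
  [/\ d b (Y :\ b) = 1, d c (Y :\ b) = 1 & d b (c |: (Y :\ b)) = d c Y].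
Proof.
have YE : Y = b |: (Y :\ b) by rewrite setD1K.
have cY0 : (#|Y :\ b| < #|Y|)%N by rewrite [X in (_ < X)%N](cardsD1 b Y) bY.
have bY0 : b \notin Y :\ b by rewrite !inE eqxx.
have cnY0 : c \notin Y :\ b by rewrite !inE negb_and cY orbT.
have bc : b != c by apply/eqP=> bc; move: cY; rewrite -bc bY.
have bcY0 : b \notin c |: (Y :\ b) by rewrite !inE negb_or bc /= negb_and eqxx.
have ex : d b (Y :\ b) + d c (b |: (Y :\ b)) = d c (Y :\ b) + d b (c |: (Y :\ b)).
  by rewrite /d setUCA; ring.
rewrite -YE in ex.
have g1 := IH b _ cY0 bY0.
have g2 := IH c _ cY0 cnY0.
have an : d c Y <= d c (Y :\ b) by apply: d_anti => //; apply: subsetDl.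
have r1 := d_ge0 b (c |: (Y :\ b)).
have r2 := d_le1 bcY0.
by case: g1 => e1; case: g2 => e2; rewrite e1 e2 in ex *; split; lra.
Qed.

Hypothesis conn : forall x, x != s -> exists2 X : {set E}, s \notin X & (~~ Q X /\ Q (x |: X)).

Lemma not_sub_pick (W V : {set E}) : W \subset V -> W != V -> exists2 y, y \in V & y \notin W.
Proof.
move=> WV WnV.
have : ~~ (V \subset W) by apply/negP=> VW; move: WnV; rewrite eqEsubset WV VW.
by case/subsetPn=> y yV yW; exists y.
Qed.

Lemma core c Y
  (IH : forall c' (Y' : {set E}), (#|Y'| < #|Y|)%N -> c' \notin Y' -> good c' Y')
  (cY : c \notin Y) (b1 : 0 < d c Y) (b2 : d c Y < 1) : False.
Proof.
set th := d c Y in b1 b2 *.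
set V := c |: Y.
have cV : c \in V by rewrite !inE eqxx.
have VcE : V :\ c = Y by rewrite /V setU1K.
have cardV : #|V| = (#|Y| + 1)%N by rewrite /V cardsU1 cY addnC.
have M1 : forall b, b \in V -> d b (V :\ b) = th.
  move=> b bV; case: (b =P c) => [->|/eqP bc]; first by rewrite VcE.
  have bY : b \in Y by move: bV; rewrite !inE (negbTE bc).
  have -> : V :\ b = c |: (Y :\ b).
    apply/setP=> y; rewrite !inE; case: (y =P c) => [->|_] //=.
    by rewrite eq_sym bc.
  by case: (mcore IH cY b1 b2 bY).
have M2 : forall x y, x \in V -> y \in V -> x != y -> d x ((V :\ x) :\ y) = 1.
  move=> x y xV yV xy.
  have cVx : #|V :\ x| = #|Y|.
    by move: cardV; rewrite (cardsD1 x V) xV add1n addn1 => -[].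
  have IH' : forall c' (Y' : {set E}), (#|Y'| < #|V :\ x|)%N -> c' \notin Y' -> good c' Y'.
    by move=> c' Y'; rewrite cVx; apply: IH.
  have xVx : x \notin V :\ x by rewrite !inE eqxx.
  have yVx : y \in V :\ x by rewrite in_setD1 eq_sym xy yV.
  have Hx := M1 x xV.
  have b1' : 0 < d x (V :\ x) by rewrite Hx.
  have b2' : d x (V :\ x) < 1 by rewrite Hx.
  by case: (mcore IH' xVx b1' b2' yVx).
have M3 : forall W, W \subset V -> W != V -> f W = (#|W|)%:R.
  move=> W WV WnV.
  have [y yV yW] := not_sub_pick WV WnV.
  have := @chain #|W| set0 W erefl _ _.
  rewrite set0U f0 add0r; apply.
    by rewrite -setI_eq0 set0I.
  move=> r rW; apply/eqP; rewrite eq_le; apply/andP; split.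
    by apply: d_le1; rewrite !inE eqxx.
  have rV : r \in V by apply: (subsetP WV).
  have ry : r != y by apply/eqP=> ry; move: yW; rewrite -ry rW.
  rewrite -(M2 r y rV yV ry); apply: d_anti; last by rewrite !in_setD1 eqxx /= andbF.
  apply/subsetP=> z; rewrite in_setD1 => /andP[zr zW]; rewrite !in_setD1 zr (subsetP WV) // !andbT.
  by apply/eqP=> zy; move: yW; rewrite -zy zW.
have fY : f Y = (#|Y|)%:R.
  apply: M3; first by apply: subsetU1.
  by apply/negP=> /eqP YV; move: cY; rewrite YV cV.
have fV : f V = (#|V|)%:R - 1 + th.
  rewrite cardV natrD /th /d -/V fY; ring.
have sV : s \notin V.
  apply/negP=> sVs; have := M1 s sVs; rewrite dsE; last by rewrite !inE eqxx.
  by case: (Q _) => H; move: b1 b2; rewrite -/th -H; lra.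
case: (boolP (Q V)) => QV.
  have [Z ZV mZ] := exists_minq erefl QV sV.
  have /set0Pn [z zZ] := mq_ne mZ.
  have zV : z \in V by apply: (subsetP ZV).
  have zs : z != s by apply/eqP=> zs; move: sV; rewrite -zs zV.
  have h1 := mq_dz0 mZ zZ.
  have h2 : d z (s |: (V :\ z)) <= d z (s |: (Z :\ z)).
    apply: d_anti; first by apply: setUS; apply: setSD.
    by rewrite in_setU1 in_setD1 eqxx (negbTE zs).
  have h0 := d_ge0 z (s |: (V :\ z)).
  have e1 : z |: (s |: (V :\ z)) = s |: V by rewrite setUCA setD1K.
  have sVz : s \notin V :\ z by rewrite in_setD1 (negbTE sV) andbF.
  have fsV : f (s |: V) = f V by rewrite real // QV addr0.
  have fsVz : f (s |: (V :\ z)) = f (V :\ z) + (if Q (V :\ z) then 0 else 1) by rewrite real.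
  have hm : f (s |: (V :\ z)) <= f (s |: V) by apply: fmono; apply: setUS; apply: subsetDl.
  have VzV : V :\ z != V by apply/negP=> /eqP VE; move: zV; rewrite -VE in_setD1 eqxx.
  have fVz := M3 _ (subsetDl V [set z]) VzV.
  have cVz : (#|V|)%:R = (#|V :\ z|)%:R + 1 :> R by rewrite (cardsD1 z V) zV add1n -natr1.
  move: h2 h0 hm; rewrite h1 /d e1 fsV fsVz fVz fV cVz.
  by case: (Q (V :\ z)) => H1 H2 H3; move: b1 b2; rewrite -/th; lra.
have cs : c != s by apply/eqP=> cs; move: sV; rewrite -cs cV.
clearbody V th.
have [X sX [nQX QcX]] := conn cs.
have scX : s \notin c |: X by rewrite in_setU1 negb_or eq_sym cs.
have [Z0 Z0sub mZ0] := exists_minq erefl QcX scX.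
have Z0V : Z0 :&: V != set0.
  apply/set0Pn; exists c; rewrite in_setI cV andbT.
  apply/negPn/negP=> cZ0; move: nQX; rewrite (Qmono _ (mq_Q mZ0)) //.
  apply/subsetP=> y yZ0; have := subsetP Z0sub y yZ0; rewrite in_setU1.
  by case/orP=> // /eqP yc; move: cZ0; rewrite -yc yZ0.
pose pm n := [exists Z : {set E}, [&& minq Z, Z :&: V != set0 & #|Z :\: V| == n]].
have pm0 : exists n, pm n by exists #|Z0 :\: V|; apply/existsP; exists Z0; rewrite mZ0 Z0V eqxx.
case: (ex_minnP pm0) => m /existsP [Z /and3P [mZ ZV /eqP cZ]] mmin.
have mZmin : forall Z', minq Z' -> Z' :&: V != set0 -> (#|Z :\: V| <= #|Z' :\: V|)%N.
  move=> Z' mZ' Z'V; rewrite cZ; apply: mmin; apply/existsP; exists Z'.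
  by rewrite mZ' Z'V eqxx.
clear m cZ mmin pm pm0 Z0 Z0sub mZ0 Z0V X sX nQX QcX scX.
set R0 := Z :\: V.
set K := Z :&: V.
have ZE : Z = K :|: R0 by rewrite /K /R0 setID.
have sZ := mq_s mZ.
have R0Z : R0 \subset Z by apply: subsetDl.
have KV : K \subset V by apply: subsetIr.
have R0V : forall y, y \in R0 -> y \notin V by move=> y; rewrite in_setD => /andP[].
have R0ne : R0 != set0.
  apply/negP=> /eqP R0E; move: QV; rewrite (Qmono _ (mq_Q mZ)) //.
  by rewrite ZE R0E setU0.
have Step1 : forall r, r \in R0 -> ~~ Q ((V :|: R0) :\ r).
  move=> r rR0; apply/negP=> Qr.
  have sVR : s \notin (V :|: R0) :\ r.
    rewrite in_setD1 in_setU negb_and negb_or sV /=; apply/orP; right.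
    by apply/negP=> /(subsetP R0Z); rewrite (negbTE sZ).
  have [Z' Z'sub mZ'] := exists_minq erefl Qr sVR.
  have rZ : r \in Z by apply: (subsetP R0Z).
  have hZ' : forall y, y \in Z' -> y \notin V -> y \in R0 :\ r.
    move=> y yZ' yV; have := subsetP Z'sub y yZ'.
    by rewrite !in_setD1 in_setU (negbTE yV).
  case: (boolP (Z' :&: V == set0)) => h.
    have : Q (Z :\ r).
      apply: Qmono (mq_Q mZ'); apply/subsetP=> y yZ'.
      have yV : y \notin V.
        by apply/negP=> yV; move/eqP: h => /setP /(_ y); rewrite in_setI yZ' yV inE.
      have := hZ' y yZ' yV; rewrite !in_setD1 => /andP[-> /(subsetP R0Z) ->].
      by [].
    by rewrite (negbTE (mq_min mZ rZ)).
  have c2 := mZmin Z' mZ' h.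
  have sub : Z' :\: V \subset R0 :\ r.
    by apply/subsetP=> y; rewrite in_setD => /andP[yV yZ']; apply: hZ'.
  have c1 := subset_leq_card sub.
  have c3 : #|R0| = (#|R0 :\ r|).+1 by rewrite (cardsD1 r R0) rR0.
  rewrite -/R0 c3 in c2; have := leq_trans c2 c1; by rewrite ltnn.
have Step2 : forall L, K \subset L -> L \subset V -> f (L :|: R0) = f L + (#|R0|)%:R.
  move=> L KL LV.
  apply: (chain erefl).
    rewrite -setI_eq0; apply/eqP/setP=> y; rewrite in_setI in_set0.
    by apply/negP=> /andP[/(subsetP LV) yV /R0V]; rewrite yV.
  move=> r rR0; apply/eqP; rewrite eq_le; apply/andP; split.
    by apply: d_le1; rewrite in_setD1 eqxx.
  have rZ : r \in Z by apply: (subsetP R0Z).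
  have rs : r != s by apply/eqP=> rs; move: sZ; rewrite -rs rZ.
  have rVR : r \notin (V :|: R0) :\ r by rewrite in_setD1 eqxx.
  have sVR : s \notin (V :|: R0) :\ r.
    rewrite in_setD1 in_setU negb_and negb_or sV /=; apply/orP; right.
    by apply/negP=> /(subsetP R0Z); rewrite (negbTE sZ).
  have QrVR : Q (r |: ((V :|: R0) :\ r)).
    rewrite setD1K; last by rewrite in_setU rR0 orbT.
    apply: Qmono (mq_Q mZ); rewrite ZE; apply: setSU; exact: KV.
  rewrite -(witness rs rVR sVR (Step1 r rR0) QrVR).
  apply: d_anti => //; apply: setSD; apply: setSU; exact: LV.
have /set0Pn [v vK] := ZV.
have vZ : v \in Z by move: vK; rewrite in_setI => /andP[].
have vV : v \in V by move: vK; rewrite in_setI => /andP[].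
have vs : v != s by apply/eqP=> vs; move: sV; rewrite -vs vV.
have sZV : s \notin (Z :|: V) :\ v by rewrite in_setD1 in_setU negb_and negb_or sV sZ orbT.
have QB : Q ((Z :|: V) :\ v).
  apply/negPn/negP=> nQB.
  have vB : v \notin (Z :|: V) :\ v by rewrite in_setD1 eqxx.
  have QvB : Q (v |: ((Z :|: V) :\ v)).
    rewrite setD1K; last by rewrite in_setU vZ.
    by apply: Qmono (mq_Q mZ); apply: subsetUl.
  have hw := witness vs vB sZV nQB QvB.
  have := fsub V ((Z :|: V) :\ v).
  have -> : V :|: (Z :|: V) :\ v = v |: ((Z :|: V) :\ v).
    rewrite setD1K; last by rewrite in_setU vZ.
    apply/setP=> y; rewrite !in_setU in_setD1.
    case: (y =P v) => [->|_]; rewrite ?vV ?vZ //=.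
    by rewrite in_setU; case: (y \in V); case: (y \in Z).
  have -> : V :&: ((Z :|: V) :\ v) = V :\ v.
    apply/setP=> y; rewrite in_setI !in_setD1 in_setU.
    by case: (y \in V); rewrite ?orbT ?andbF ?andbT.
  have VvV : V :\ v != V by apply/negP=> /eqP VE; move: vV; rewrite -VE in_setD1 eqxx.
  rewrite (M3 _ (subsetDl V [set v]) VvV) fV.
  have cVv : (#|V|)%:R = (#|V :\ v|)%:R + 1 :> R by rewrite (cardsD1 v V) vV add1n -natr1.
  rewrite cVv; move: hw; rewrite /d => hw.
  by move: b2; lra.
have [Z2 Z2sub mZ2] := exists_minq erefl QB sZV.
have hz2 : forall y, y \in Z2 -> y \notin V -> y \in Z :\ v.
  move=> y yZ2 yV; have := subsetP Z2sub y yZ2.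
  by rewrite !in_setD1 in_setU (negbTE yV) orbF.
have vZ2 : v \notin Z2.
  by apply/negP=> /(subsetP Z2sub); rewrite in_setD1 eqxx.
have Z2V : Z2 :&: V != set0.
  apply/negP=> /eqP h.
  have : Q (Z :\ v).
    apply: Qmono (mq_Q mZ2); apply/subsetP=> y yZ2.
    have yV : y \notin V.
      by apply/negP=> yV; move/setP: h => /(_ y); rewrite in_setI yZ2 yV inE.
    exact: hz2.
  by rewrite (negbTE (mq_min mZ vZ)).
have R2 : Z2 :\: V = R0.
  apply/eqP; rewrite eqEcard; apply/andP; split; last exact: (mZmin Z2 mZ2 Z2V).
  apply/subsetP=> y; rewrite in_setD => /andP[yV yZ2].
  have := hz2 y yZ2 yV; rewrite in_setD1 => /andP[_ yZ].
  by rewrite /R0 in_setD yV yZ.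
set L := K :|: (Z2 :&: V).
have KL : K \subset L by apply: subsetUl.
have LV : L \subset V by rewrite subUset KV subsetIr.
have ZZ2 : Z :|: Z2 = L :|: R0.
  apply/setP=> y; move: (hz2 y); rewrite in_setD1 /L /K /R0 !in_setU !in_setI in_setD.
  by case: (y \in Z2); case: (y \in V); case: (y \in Z) => //= /(_ isT isT); rewrite andbF.
have LR0 : L :&: R0 = set0.
  apply/setP=> y; rewrite in_setI in_set0.
  by apply/negP=> /andP[/(subsetP LV) yV /R0V]; rewrite yV.
have hs := fsub (s |: Z) (s |: Z2).
have e1 : (s |: Z) :|: (s |: Z2) = s |: (Z :|: Z2) by rewrite setUACA setUid.
have e2 : (s |: Z) :&: (s |: Z2) = s |: (Z :&: Z2) by rewrite -setUIr.
rewrite e1 e2 (mq_fsZ mZ) (mq_fsZ mZ2) in hs.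
have ZZ2Z : Z :&: Z2 != Z.
  by apply/negP=> /eqP ZE2; move: vZ; rewrite -ZE2 in_setI (negbTE vZ2) andbF.
rewrite (mq_fs mZ (subsetIl Z Z2) ZZ2Z) in hs.
have cUI := congr1 (fun n => n%:R : R) (cardsUI Z Z2); rewrite /= !natrD in cUI.
have hm : f (Z :|: Z2) <= f (s |: (Z :|: Z2)) by apply: fmono; apply: subsetU1.
have cLR : (#|L :|: R0|)%:R = (#|L|)%:R + (#|R0|)%:R :> R.
  by rewrite -natrD -cardsUI LR0 cards0 addn0.
have h2 := Step2 L KL LV.
rewrite ZZ2 in hs hm cUI.
rewrite h2 in hm.
case: (boolP (L == V)) => LVe.
  move/eqP: LVe => LVe; rewrite LVe in hs hm cUI cLR; rewrite fV in hm.
  by move: b1; lra.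
rewrite (M3 L LV LVe) in hm.
lra.
Qed.

Lemma nobad n : forall c Y, (#|Y| < n)%N -> c \notin Y -> good c Y.
Proof.
elim: n => [//|n IH] c Y hY cY.
case: (ltnP #|Y| n) => h; first exact: IH.
have IH' : forall c' (Y' : {set E}), (#|Y'| < #|Y|)%N -> c' \notin Y' -> good c' Y'.
  by move=> c' Y' h'; apply: IH; apply: leq_trans h' _; rewrite -ltnS.
rewrite /good; have h0 := d_ge0 c Y; have h1 := d_le1 cY.
case: (boolP (d c Y == 0)) => [/eqP|e0]; first by left.
case: (boolP (d c Y == 1)) => [/eqP|e1]; first by right.
exfalso; apply: (core IH' cY).
  by rewrite lt_neqAle eq_sym e0 h0.
by rewrite lt_neqAle e1 h1.
Qed.

Lemma nobad_all c Y : c \notin Y -> good c Y.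
Proof. exact: (@nobad #|Y|.+1). Qed.

Lemma integral n : forall X, #|X| = n -> exists m : nat, f X = m%:R.
Proof.
elim: n => [|n IH] X cX.
  by move/eqP: cX; rewrite cards_eq0 => /eqP ->; exists 0%N; rewrite f0.
have : (0 < #|X|)%N by rewrite cX.
case/card_gt0P=> x xX.
have cX1 : #|X :\ x| = n by move: cX; rewrite (cardsD1 x X) xX add1n => -[].
have [m hm] := IH _ cX1.
have xX1 : x \notin X :\ x by rewrite in_setD1 eqxx.
have := nobad_all xX1; rewrite /good /d setD1K // hm => -[] h.
  by exists m; lra.
by exists m.+1; rewrite -natr1; lra.
Qed.

End Core.

Definition QP (P : finType) (A : {set {set P}}) (X : {set option P}) : bool :=
  [set a | Some a \in X] \in A.

Lemma lift_pre (P : finType) (X : {set option P}) :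
  None \notin X -> liftP [set a | Some a \in X] = X.
Proof.
move=> nX; apply/setP=> -[a|].
  rewrite /liftP; apply/imsetP/idP=> [[b]|aX].
    by rewrite inE => bX [->].
  by exists a => //; rewrite inE.
by rewrite (negbTE nX); apply/imsetP=> -[b].
Qed.

Lemma pre_lift (P : finType) (X : {set P}) : [set a | Some a \in liftP X] = X.
Proof.
apply/setP=> a; rewrite inE /liftP; apply/imsetP/idP=> [[b bX [->]]//|aX].
by exists a.
Qed.

Lemma QP_mono (P : finType) (A : {set {set P}}) : access_structure A ->
  forall X Y : {set option P}, X \subset Y -> QP A X -> QP A Y.
Proof.
case=> _ up _ X Y XY; rewrite /QP => QX; apply: up QX _.
by apply/subsetP=> a; rewrite !inE => /(subsetP XY).
Qed.

Lemma QP_0 (P : finType) (A : {set {set P}}) : access_structure A -> ~~ QP A set0.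
Proof.
case=> _ _ n0; rewrite /QP.
have -> : [set a | Some a \in (set0 : {set option P})] = set0.
  by apply/setP=> a; rewrite !inE.
exact: n0.
Qed.

Lemma QP_real (R : realFieldType) (P : finType) (A : {set {set P}}) (f : {set option P} -> R) :
  realizes f A -> f [set None] = 1 ->
  forall X : {set option P}, None \notin X -> f (None |: X) = f X + (if QP A X then 0 else 1).
Proof.
move=> rf fs X nX.
have [[h1 _] [h2 _]] := rf [set a | Some a \in X].
have ew : withs [set a | Some a \in X] = None |: X by rewrite /withs lift_pre.
rewrite /QP; case: ifP => q.
  by rewrite addr0 -ew h1 // lift_pre.
by rewrite -ew h2 ?q // lift_pre // fs.
Qed.

Lemma QP_conn (P : finType) (A : {set {set P}}) : connected_as A ->
  forall x : option P, x != None ->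
  exists2 X : {set option P}, None \notin X & (~~ QP A X /\ QP A (x |: X)).
Proof.
move=> con [a|] // _.
have [X0 [nX0 aX0]] := con a.
exists (liftP X0).
  by apply/imsetP=> -[b].
rewrite /QP pre_lift; split=> //.
have -> : [set b | Some b \in Some a |: liftP X0] = a |: X0.
  apply/setP=> b; rewrite !inE -[Some b \in liftP X0]/(Some b \in liftP X0).
  by rewrite -{2}(pre_lift X0) inE; congr (_ || _); apply/eqP/eqP=> [[]|->].
exact: aX0.
Qed.

Theorem theorem3p4 (R : realFieldType) (P : finType) (A : {set {set P}})
    (f : {set option P} -> R) :
  access_structure A -> connected_as A ->
  polymatroid f -> realizes f A ->
  (forall a : P, f [set Some a] = 1) -> f [set None] = 1 ->
  matroid f /\
  (forall g : {set option P} -> R,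
      polymatroid g -> realizes g A ->
      (forall a : P, g [set Some a] = 1) -> g [set None] = 1 ->
      g = f).
Proof.
move=> acc con pf rf fa fs.
have f1 : forall x, f [set x] = 1 by case.
have Qm := QP_mono acc.
have Q0 := QP_0 acc.
have Qc := QP_conn con.
case: pf => f0 fnn fmono fsub.
have freal := QP_real rf fs.
split.
  split=> //.
    move=> X; have [m hm] := integral f0 fmono fsub f1 Qm Q0 freal Qc (erefl #|X|).
    by exists m; rewrite hm -pmulrn.
  by move=> x; right.
move=> g [g0 gnn gmono gsub] rg ga gs.
have g1 : forall x, g [set x] = 1 by case.
have greal := QP_real rg gs.
pose h X := (f X + g X) / 2.
have h0 : h set0 = 0 by rewrite /h f0 g0; lra.
have hmono : forall X Y : {set option P}, X \subset Y -> h X <= h Y.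
  by move=> X Y XY; have := fmono X Y XY; have := gmono X Y XY; rewrite /h; lra.
have hsub : forall X Y : {set option P}, h (X :|: Y) + h (X :&: Y) <= h X + h Y.
  by move=> X Y; have := fsub X Y; have := gsub X Y; rewrite /h; lra.
have h1 : forall x, h [set x] = 1 by move=> x; rewrite /h f1 g1; lra.
have hreal : forall X : {set option P}, None \notin X ->
    h (None |: X) = h X + (if QP A X then 0 else 1).
  by move=> X nX; rewrite /h freal // greal //; case: (QP A X); lra.
apply: functional_extensionality => X.
move: {2}#|X| (erefl #|X|) => n; elim: n X => [|n IH] X cX.
  by move/eqP: cX; rewrite cards_eq0 => /eqP ->; rewrite f0 g0.
have : (0 < #|X|)%N by rewrite cX.
case/card_gt0P=> x xX.
have cX1 : #|X :\ x| = n by move: cX; rewrite (cardsD1 x X) xX add1n => -[].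
have e := IH _ cX1.
have xX1 : x \notin X :\ x by rewrite in_setD1 eqxx.
have gf := nobad_all f0 fmono fsub f1 Qm Q0 freal Qc xX1.
have gg := nobad_all g0 gmono gsub g1 Qm Q0 greal Qc xX1.
have gh := nobad_all h0 hmono hsub h1 Qm Q0 hreal Qc xX1.
move: gf gg gh; rewrite /good /d /h setD1K // e.
by case=> H1; case=> H2; case=> H3; lra.
Qed.
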